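(* Let $K$ be a field, $s\ge2$, $S=K[t_1,\ldots,t_s]$, and let $\mathcal{L}\subset\mathbb{Z}^s$ be a homogeneous lattice of rank $s-1$. Let ${\rm in}(I(\mathcal{L}))$ be the initial ideal of $I(\mathcal{L})$ with respect to the reverse lexicographical order. Then for every $\widetilde{\alpha}=\alpha+\mathcal{L}$ in the torsion subgroup $T(\mathbb{Z}^s/\mathcal{L})$ there exists a unique $a=(a_1,\ldots,a_s)\in\mathbb{Z}^s$ such that (i) $a_i\ge0$ for $i=1,\ldots,s-1$; (ii) $t_1^{a_1}\cdots t_{s-1}^{a_{s-1}}\notin{\rm in}(I(\mathcal{L}))$; and (iii) $a+\mathcal{L}=\alpha+\mathcal{L}$.
   Context: A lattice is a subgroup of $\mathbb{Z}^s$; it is homogeneous if $\sum_i a_i=0$ for every $a\in\mathcal{L}$. For $a\in\mathbb{Z}^s$ write $a=a^+-a^-$ with $a^+,a^-\in\mathbb{N}^s$ of disjoint supports, $t^c=t_1^{c_1}\cdots t_s^{c_s}$, and $I(\mathcal{L})=(\{t^{a^+}-t^{a^-}: a\in\mathcal{L}\})$. The reverse lexicographical order on monomials is: $t^b\succ t^a$ iff the last nonzero entry of $b-a$ is negative. The initial ideal ${\rm in}(L)$ is generated by the leading terms of the polynomials of $L$. $T(M)$ denotes the torsion subgroup of $M$. *)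

(* Defs.v *)
From mathcomp Require Import all_boot all_order all_algebra.
From mathcomp Require Import mpoly.
Set Implicit Arguments. Unset Strict Implicit. Unset Printing Implicit Defensive.
Import Order.TTheory GRing.Theory Num.Theory.
Local Open Scope ring_scope.

(* Z^s is represented by row vectors 'rV[int]_s ; entry i of a is a ord0 i. *)

Definition is_lattice (s : nat) (L : 'rV[int]_s -> Prop) : Prop :=
  L 0 /\ (forall a b, L a -> L b -> L (a - b)).

Definition homogeneous (s : nat) (L : 'rV[int]_s -> Prop) : Prop :=
  forall a, L a -> \sum_(i < s) a ord0 i = 0.

(* rank of L = maximal number of Q-linearly independent elements of L. *)
Definition lattice_rank (s : nat) (L : 'rV[int]_s -> Prop) (r : nat) : Prop :=
  (exists M : 'M[int]_(r, s), (forall i, L (row i M)) /\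
      \rank (map_mx (fun z : int => z%:~R : rat) M) = r) /\
  (forall M : 'M[int]_(r.+1, s), (forall i, L (row i M)) ->
      (\rank (map_mx (fun z : int => z%:~R : rat) M) <= r)%N).

Definition mpos (s : nat) (a : 'rV[int]_s) : 'X_{1..s} :=
  [multinom (if (0 <= a ord0 i)%R then `|a ord0 i|%N else 0%N) | i < s].
Definition mneg (s : nat) (a : 'rV[int]_s) : 'X_{1..s} :=
  [multinom (if (a ord0 i < 0)%R then `|a ord0 i|%N else 0%N) | i < s].

Definition ideal_gen (R : comNzRingType) (G : R -> Prop) (f : R) : Prop :=
  exists (n : nat) (c h : 'I_n -> R),
    (forall i, G (h i)) /\ f = \sum_(i < n) c i * h i.

Definition lattice_ideal (K : fieldType) (s : nat) (L : 'rV[int]_s -> Prop)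
  : {mpoly K[s]} -> Prop :=
  ideal_gen (fun g : {mpoly K[s]} =>
    exists a, L a /\ g = 'X_[mpos a] - 'X_[mneg a]).

(* Reverse lexicographic order: t^b > t^a iff the last nonzero entry of
   b - a is negative. *)
Definition revlex_gt (s : nat) (b a : 'X_{1..s}) : Prop :=
  exists i : 'I_s, (b i < a i)%N /\
    (forall j : 'I_s, (i < j)%N -> b j = a j).

Definition is_lead_term (K : fieldType) (s : nat) (f t : {mpoly K[s]}) : Prop :=
  exists m : 'X_{1..s}, m \in msupp f /\
    (forall m', m' \in msupp f -> m' != m -> revlex_gt m m') /\
    t = f@_m *: 'X_[m].

Definition initial_ideal (K : fieldType) (s : nat) (I : {mpoly K[s]} -> Prop)
  : {mpoly K[s]} -> Prop :=
  ideal_gen (fun t => exists f, I f /\ f != 0 /\ is_lead_term f t).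

Definition torsion_class (s : nat) (L : 'rV[int]_s -> Prop) (alpha : 'rV[int]_s)
  : Prop := exists k : nat, (0 < k)%N /\ L (alpha *+ k).

Definition trunc_mon (s : nat) (a : 'rV[int]_s) : 'X_{1..s} :=
  [multinom (if (i < s.-1)%N then `|a ord0 i|%N else 0%N) | i < s].

(* Main.v *)
Require Import Defs.
From mathcomp Require Import all_boot all_order all_algebra.
From mathcomp Require Import mpoly.
From mathcomp Require Import zify ring.
From Stdlib Require Import Classical ClassicalEpsilon.
Import Order.TTheory GRing.Theory Num.Theory.
Local Open Scope ring_scope.
Set Implicit Arguments. Unset Strict Implicit. Unset Printing Implicit Defensive.


Definition pdec (P : Prop) : bool :=
  if excluded_middle_informative P then true else false.
Lemma pdecP (P : Prop) : reflect P (pdec P).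
Proof. by rewrite /pdec; case: excluded_middle_informative => h; constructor. Qed.

Lemma latN s (L : 'rV[int]_s -> Prop) : is_lattice L -> forall a, L a -> L (- a).
Proof. by case=> h0 hB a ha; rewrite -sub0r; apply: hB. Qed.
Lemma latD s (L : 'rV[int]_s -> Prop) : is_lattice L -> forall a b, L a -> L b -> L (a + b).
Proof. move=> hL a b ha hb; rewrite -[b]opprK; apply: hL.2 => //; exact: latN. Qed.
Lemma latB s (L : 'rV[int]_s -> Prop) : is_lattice L -> forall a b, L a -> L b -> L (a - b).
Proof. by move=> hL; apply: hL.2. Qed.
Lemma latMn s (L : 'rV[int]_s -> Prop) : is_lattice L -> forall a k, L a -> L (a *+ k).
Proof. move=> hL a k ha; elim: k => [|k ih]; first by rewrite mulr0n; exact: hL.1.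
by rewrite mulrS; apply: latD. Qed.
Lemma latZ s (L : 'rV[int]_s -> Prop) : is_lattice L -> forall (c : int) a, L a -> L (c *: a).
Proof. move=> hL c a ha; case: c => k.
- by rewrite -[Posz k]intz scaler_int; apply: latMn.
- by rewrite -[Negz k]intz scaler_int NegzE mulrNz; apply: (latN hL); apply: latMn.
Qed.
Lemma latSym s (L : 'rV[int]_s -> Prop) : is_lattice L -> forall a b, L (a - b) -> L (b - a).
Proof. by move=> hL a b h; rewrite -opprB; apply: latN. Qed.
Lemma lat_sum s (L : 'rV[int]_s -> Prop) : is_lattice L -> forall m (F : 'I_m -> 'rV[int]_s),
  (forall i, L (F i)) -> L (\sum_(i < m) F i).
Proof. move=> hL m F hF; apply: (big_ind L) => //; [exact: hL.1 | exact: latD]. Qed.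

Definition vec s (u : 'X_{1..s}) : 'rV[int]_s := \row_i ((u i)%:Z).
Lemma vecE s (u : 'X_{1..s}) i : vec u ord0 i = (u i)%:Z. Proof. by rewrite mxE. Qed.
Lemma vecD s (u v : 'X_{1..s}) : vec (u + v)%MM = vec u + vec v.
Proof. by apply/rowP=> i; rewrite !mxE mnmDE PoszD. Qed.
Lemma vec_inj s : injective (@vec s).
Proof. move=> u v h; apply/mnmP=> i; have := congr1 (fun a : 'rV[int]_s => a ord0 i) h.
by rewrite !vecE => -[]. Qed.

Definition zgt s (a b : 'rV[int]_s) : Prop :=
  exists i : 'I_s, a ord0 i < b ord0 i /\ forall j : 'I_s, (i < j)%N -> a ord0 j = b ord0 j.

Lemma zgt_irr s (a : 'rV[int]_s) : ~ zgt a a.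
Proof. by case=> i [h _]; rewrite ltxx in h. Qed.
Lemma zgt_trans s (a b c : 'rV[int]_s) : zgt a b -> zgt b c -> zgt a c.
Proof.
move=> [i [hi ei]] [j [hj ej]].
case: (ltngtP i j) => hij.
- exists j; split; first by rewrite ei.
  move=> k hk; rewrite ei ?ej //; exact: ltn_trans hk.
- exists i; split; first by rewrite -ej.
  move=> k hk; rewrite ei ?ej //; exact: ltn_trans hk.
- have eij : i = j by apply: val_inj.
  subst j; exists i; split; first exact: lt_trans hj.
  by move=> k hk; rewrite ei ?ej.
Qed.
Lemma zgt_tr s (a b c : 'rV[int]_s) : zgt a b -> zgt (a + c) (b + c).
Proof. move=> [i [hi ei]]; exists i; split; first by rewrite !mxE ltrD2r.
by move=> j hj; rewrite !mxE ei. Qed.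
Lemma zgt_total s (a b : 'rV[int]_s) : a != b -> zgt a b \/ zgt b a.
Proof.
move=> nab.
have [i0 hi0] : exists i, a ord0 i != b ord0 i.
  apply/existsP; apply: contraR nab => /existsPn h; apply/eqP/rowP => i.
  by have := h i; rewrite negbK => /eqP.
case: (@arg_maxnP _ i0 (fun i => a ord0 i != b ord0 i) (fun i => nat_of_ord i) hi0).
move=> i hi hmax.
have eq_above : forall j : 'I_s, (i < j)%N -> a ord0 j = b ord0 j.
  move=> j hj; apply/eqP; apply: contraTT hj => hne; rewrite -leqNgt; exact: hmax.
case: (ltgtP (a ord0 i) (b ord0 i)) hi => // h _.
- by left; exists i.
- by right; exists i; split => // j hj; rewrite eq_above.
Qed.



Definition psi (K : fieldType) s (P : pred 'X_{1..s}) (g : {mpoly K[s]}) : K :=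
  \sum_(w <- msupp g) (if P w then g@_w else 0).

Lemma psi_sup (K : fieldType) s P (g : {mpoly K[s]}) (r : seq 'X_{1..s}) : uniq r ->
  {subset msupp g <= r} ->
  psi P g = \sum_(w <- r) (if P w then g@_w else 0).
Proof.
move=> ur sub.
rewrite [RHS](bigID (fun w => w \in msupp g)) /= [X in _ + X]big1 ?addr0; last first.
  by move=> w hw; rewrite memN_msupp_eq0 // if_same.
rewrite -big_filter /psi; apply: perm_big.
apply: uniq_perm; [exact: msupp_uniq | exact: filter_uniq | ].
move=> w; rewrite mem_filter; apply/idP/andP => [h|[]//]; split => //; exact: sub.
Qed.

Lemma psiD (K : fieldType) s P (g h : {mpoly K[s]}) : psi P (g + h) = psi P g + psi P h.
Proof.
set r := undup (msupp g ++ msupp h).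
have ur : uniq r by exact: undup_uniq.
have s1 : {subset msupp g <= r} by move=> w hw; rewrite mem_undup mem_cat hw.
have s2 : {subset msupp h <= r} by move=> w hw; rewrite mem_undup mem_cat hw orbT.
have s3 : {subset msupp (g + h) <= r} by move=> w /msuppD_le; rewrite mem_undup.
rewrite (psi_sup P ur s1) (psi_sup P ur s2) (psi_sup P ur s3).
rewrite -big_split; apply: eq_bigr => w _; rewrite mcoeffD; case: ifP => _ /=. by []. by rewrite addr0.
Qed.

Lemma psiZ (K : fieldType) s P (g : {mpoly K[s]}) c : psi P (c *: g) = c * psi P g.
Proof.
rewrite (@psi_sup _ _ _ (c *: g) (msupp g)) ?msupp_uniq //; last exact: msuppZ_le.
rewrite /psi mulr_sumr; apply: eq_bigr => w _; rewrite mcoeffZ; case: (P w); by rewrite ?mulr0.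
Qed.

Lemma psi0 (K : fieldType) s P : psi P (0 : {mpoly K[s]}) = 0.
Proof. by rewrite -(scale0r 0) psiZ mul0r. Qed.

Lemma psiB (K : fieldType) s P (g h : {mpoly K[s]}) : psi P (g - h) = psi P g - psi P h.
Proof. by rewrite psiD -scaleN1r psiZ mulN1r. Qed.

Lemma psi_sum (K : fieldType) s P (I : Type) (r : seq I) (F : I -> {mpoly K[s]}) :
  psi P (\sum_(i <- r) F i) = \sum_(i <- r) psi P (F i).
Proof. exact: (big_morph (psi P) (@psiD K s P) (psi0 K P)). Qed.

Lemma psiX (K : fieldType) s P (v : 'X_{1..s}) (c : K) :
  psi P (c *: 'X_[v]) = if P v then c else 0.
Proof.
rewrite (@psi_sup _ _ _ _ [:: v]) //; last by move=> w /msuppZ_le; rewrite msuppX.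
by rewrite big_seq1 mcoeffZ mcoeffX eqxx mulr1.
Qed.

Lemma mulX (K : fieldType) s (c : {mpoly K[s]}) p :
  c * 'X_[p] = \sum_(w <- msupp c) c@_w *: 'X_[(w + p)%MM].
Proof.
rewrite {1}(mpolyE c) mulr_suml; apply: eq_bigr => w _.
by rewrite -scalerAl -mpolyXD.
Qed.

Lemma psi_mulX (K : fieldType) s P (c : {mpoly K[s]}) p :
  psi P (c * 'X_[p]) = \sum_(w <- msupp c) (if P (w + p)%MM then c@_w else 0).
Proof. by rewrite mulX psi_sum; apply: eq_bigr => w _; rewrite psiX. Qed.

Lemma psi_binom (K : fieldType) s P (c : {mpoly K[s]}) p q :
  (forall w, P (w + p)%MM = P (w + q)%MM) -> psi P (c * ('X_[p] - 'X_[q])) = 0.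
Proof.
move=> H; rewrite mulrBr psiB !psi_mulX.
by rewrite (eq_bigr (fun w => if P (w + q)%MM then c@_w else 0)) ?subrr // => w _; rewrite H.
Qed.

Lemma vec_mpos_mneg s (a : 'rV[int]_s) : vec (mpos a) - vec (mneg a) = a.
Proof.
apply/rowP => i; rewrite !mxE !mnmE.
change (a 0 i) with (a ord0 i).
by case: (ltrP (a ord0 i) 0) => h; lia.
Qed.

Lemma psi_ideal (K : fieldType) s (L : 'rV[int]_s -> Prop) (P : pred 'X_{1..s}) : is_lattice L ->
  (forall w p q, L (vec p - vec q) -> P (w + p)%MM = P (w + q)%MM) ->
  forall g, @lattice_ideal K s L g -> psi P g = 0.
Proof.
move=> hL HP g [n [c [h [hh ->]]]].
rewrite psi_sum big1 // => i _.
have [a [ha ->]] := hh i.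
apply: psi_binom => w; apply: HP; by rewrite vec_mpos_mneg.
Qed.



Lemma lead_partner (K : fieldType) s (L : 'rV[int]_s -> Prop) (f : {mpoly K[s]}) m :
  is_lattice L -> @lattice_ideal K s L f -> m \in msupp f ->
  exists2 m'', m'' \in msupp f & (m'' != m /\ L (vec m - vec m'')).
Proof.
move=> hL hf hm.
pose P := fun w : 'X_{1..s} => pdec (L (vec w - vec m)).
have HP : forall w p q, L (vec p - vec q) -> P (w + p)%MM = P (w + q)%MM.
  move=> w p q hpq; rewrite /P; apply/idP/idP => /pdecP h; apply/pdecP.
  - have -> : vec (w + q) - vec m = (vec (w + p) - vec m) - (vec p - vec q).
      by apply/rowP => i; rewrite !mxE !mnmDE; lia.
    exact: latB.
  - have -> : vec (w + p) - vec m = (vec (w + q) - vec m) + (vec p - vec q).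
      by apply/rowP => i; rewrite !mxE !mnmDE; lia.
    exact: latD.
have h0 := psi_ideal hL HP hf.
apply: NNPP => hn; move: h0.
rewrite /psi (bigD1_seq m) //= ?msupp_uniq //.
have -> : P m by apply/pdecP; rewrite subrr; exact: hL.1.
rewrite big1_seq ?addr0 => [|w /andP [hw hwm]].
  by apply/eqP; rewrite -mcoeff_msupp.
case: ifP => // /pdecP hLw; exfalso; apply: hn; exists w => //; split => //.
exact: latSym.
Qed.

Lemma revlex_zgt s (b a : 'X_{1..s}) : revlex_gt b a -> zgt (vec b) (vec a).
Proof. case=> i [h1 h2]; exists i; split; first by rewrite !vecE ltz_nat.
by move=> j hj; rewrite !vecE h2. Qed.

Lemma KL (K : fieldType) s (L : 'rV[int]_s -> Prop) u : is_lattice L ->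
  initial_ideal (@lattice_ideal K s L) 'X_[u] ->
  exists u', zgt (vec u) (vec u') /\ L (vec u - vec u').
Proof.
move=> hL [n [c [h [hh hX]]]].
have e := congr1 (mcoeff u) hX.
rewrite mcoeffX eqxx raddf_sum /= in e.
have [i hi] : exists i, (c i * h i)@_u != 0.
  apply: NNPP => hn; move: e; rewrite big1 => [|i _].
    by move/eqP; rewrite oner_eq0.
  by apply/eqP; apply/negP => hi; apply: hn; exists i; apply/negP.
have [f [hf [fnz [m [hm [hmax hfe]]]]]] := hh i.
rewrite hfe -scalerAr mcoeffZ in hi.
have hu : (c i * 'X_[m])@_u != 0 by apply: contraNneq hi => ->; rewrite mulr0.
rewrite -mcoeff_msupp (perm_mem (msuppMX _ _)) in hu.
case/mapP: hu => w hw ->.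
have [m'' hm'' [ne hLm]] := lead_partner hL hf hm.
have gt := hmax m'' hm'' ne.
exists (m'' + w)%MM; split.
- by rewrite !vecD; apply: zgt_tr; apply: revlex_zgt.
- by rewrite !vecD opprD addrACA subrr addr0.
Qed.



Lemma binom_in (K : fieldType) s (L : 'rV[int]_s -> Prop) (u v : 'X_{1..s}) :
  u != v -> L (vec u - vec v) -> revlex_gt u v ->
  initial_ideal (@lattice_ideal K s L) 'X_[u].
Proof.
move=> nuv hLuv gt.
have cu : ('X_[u] - 'X_[v] : {mpoly K[s]})@_u = 1.
  by rewrite mcoeffB !mcoeffX eqxx eq_sym (negbTE nuv) subr0.
exists 1%N, (fun _ => 1), (fun _ => 'X_[u]); split; last by rewrite big_ord1 mul1r.
move=> _; exists ('X_[u] - 'X_[v]); split; [|split].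
- pose l := vec u - vec v.
  pose w := [multinom minn (u i) (v i) | i < s].
  exists 1%N, (fun _ => 'X_[w]), (fun _ => 'X_[mpos l] - 'X_[mneg l]); split.
    by move=> _; exists l.
  rewrite big_ord1 mulrBr -!mpolyXD; congr (_ - _); congr ('X_[_]);
    apply/mnmP => i; rewrite mnmDE !mnmE !mxE; case: ifPn => h; lia.
- apply/eqP => e; have := congr1 (mcoeff u) e; rewrite cu mcoeff0 => /eqP.
  by rewrite oner_eq0.
- exists u; split; [|split].
  + by rewrite mcoeff_msupp cu oner_eq0.
  + move=> m' hm' ne.
    rewrite mcoeff_msupp mcoeffB !mcoeffX [u == m']eq_sym (negbTE ne) sub0r oppr_eq0 in hm'.
    by move: hm'; case: (v =P m') => [<- //|_]; rewrite eqxx.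
  + by rewrite cu scale1r.
Qed.



Lemma fin_descent (X : Type) (T : finType) (e : X -> T) (P Q : X -> Prop)
  (Rel : X -> X -> Prop) :
  (forall x, ~ Rel x x) -> (forall x y z, Rel x y -> Rel y z -> Rel x z) ->
  (forall x y, P x -> P y -> e x = e y -> x = y) ->
  (forall x, P x -> ~ Q x -> exists y, P y /\ Rel x y) ->
  forall x, P x -> exists y, P y /\ Q y.
Proof.
move=> irr tr inj step.
pose S x := [set t : T | pdec (exists y, P y /\ e y = t /\ Rel x y)].
suff H : forall k x, (#|S x| < k)%N -> P x -> exists y, P y /\ Q y.
  by move=> x; apply: (H (#|S x|).+1).
elim=> [//|k ih] x hk px.
case: (classic (Q x)) => [qx|nq]; first by exists x.
have [y [py rxy]] := step x px nq.
apply: (ih y) => //.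
have : S y \proper S x.
  apply/properP; split.
  - apply/subsetP => t; rewrite !inE => /pdecP [z [pz [ez rz]]]; apply/pdecP.
    exists z; split=> //; split => //; exact: tr rxy rz.
  - exists (e y); rewrite !inE; first by apply/pdecP; exists y.
    apply/pdecP => -[z [pz [ez rz]]]; have ezy := inj _ _ pz py ez; subst z.
    exact: irr rz.
move/proper_card => h; rewrite ltnS in hk; exact: leq_trans h hk.
Qed.



Lemma intr_sumE (I : finType) (F : I -> int) :
  ((\sum_i F i)%:~R : rat) = \sum_i (F i)%:~R.
Proof. exact: (big_morph (fun z : int => z%:~R : rat) (@intrD _) (mulr0z 1)). Qed.

Lemma rank_shift s (L : 'rV[int]_s -> Prop) : (0 < s)%N -> is_lattice L -> homogeneous L ->
  lattice_rank L s.-1 -> forall v : 'rV[int]_s, \sum_(i < s) v ord0 i = 0 ->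
  exists k, (0 < k)%N /\ L (v *+ k).
Proof.
move=> s0 hL hH [[M [hM rkM]] _] v hv.
pose f := fun z : int => z%:~R : rat.
pose Mq := map_mx f M. pose vq := map_mx f v.
pose ones : 'cV[rat]_s := const_mx 1.
have hMo : Mq *m ones = 0.
  apply/colP => i; rewrite !mxE.
  under eq_bigr do rewrite !mxE mulr1.
  rewrite -intr_sumE; have := hH _ (hM i).
  under eq_bigr do rewrite mxE.
  by move=> ->.
have hvo : vq *m ones = 0.
  apply/colP => i; rewrite !mxE.
  under eq_bigr do rewrite !mxE mulr1.
  by rewrite -intr_sumE (ord1 i) hv.
pose Nm := col_mx Mq vq.
have hNo : Nm *m ones = 0 by rewrite mul_col_mx hMo hvo col_mx0.
have r1 : (1 <= \rank ones)%N.
  rewrite lt0n mxrank_eq0; apply/eqP => /colP /(_ (Ordinal s0)).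
  by rewrite !mxE => /eqP; rewrite oner_eq0.
have rN : (\rank Nm <= s.-1)%N.
  have := mulmx0_rank_max hNo; lia.
have sMN : (Mq <= Nm)%MS by rewrite -addsmxE addsmxSl.
have sNM : (Nm <= Mq)%MS.
  have := mxrank_leqif_sup sMN => -[_ <-].
  have rkMq : \rank Mq = s.-1 := rkM.
  by rewrite eqn_leq mxrankS //= rkMq.
have : (vq <= Mq)%MS.
  apply: submx_trans sNM; by rewrite -addsmxE addsmxSr.
case/submxP => x hx.
pose kq : int := \prod_j denq (x ord0 j).
have kq0 : 0 < kq by apply: prodr_gt0 => j _; exact: denq_gt0.
pose y : 'rV[int]_(s.-1) := \row_j (numq (x ord0 j) * \prod_(l | l != j) denq (x ord0 l)).
have hy : forall j, ((y ord0 j)%:~R : rat) = kq%:~R * x ord0 j.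
  move=> j; rewrite /f mxE /kq [X in _ = X%:~R * _](bigD1 j) //= !intrM numqE.
  by ring.
have key : v *~ kq = y *m M.
  apply/matrixP => a i; rewrite (ord1 a); apply: (@intr_inj rat).
  have := congr1 (fun A : 'rV[rat]_s => A ord0 i) hx.
  rewrite !mxE /f => hvi.
  rewrite -scaler_int intz !mxE intrM hvi mulr_sumr intr_sumE.
  apply: eq_bigr => j _; rewrite intrM hy !mxE; by rewrite mulrA.
clear hy; case: kq kq0 key => // k k0 key.
exists k; split; first lia.
have -> : v *+ k = v *~ Posz k by [].
rewrite key mulmx_sum_row; apply: lat_sum => // j.
apply: latZ => //; exact: hM.
Qed.



Lemma zgt_revlex s (b a : 'X_{1..s}) : zgt (vec b) (vec a) -> revlex_gt b a.
Proof. case=> i [h1 h2]; exists i; split; first by move: h1; rewrite !vecE ltz_nat.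
by move=> j hj; have := h2 j hj; rewrite !vecE => -[]. Qed.

Definition good (K : fieldType) n (L : 'rV[int]_n.+1 -> Prop) (alpha a : 'rV[int]_n.+1) :=
  (forall i : 'I_n.+1, (i < n)%N -> 0 <= a ord0 i) /\
  ~ initial_ideal (@lattice_ideal K n.+1 L) 'X_[trunc_mon a] /\ L (a - alpha).

Lemma ord_lt_max n (i : 'I_n.+1) : (i < n)%N = (i != ord_max).
Proof. apply/idP/idP => h.
- by apply: contraTneq h => ->; rewrite /= ltnn.
- have := ltn_ord i; rewrite ltnS leq_eqVlt => /orP [/eqP e|//].
  by exfalso; move/eqP: h; apply; apply: val_inj.
Qed.

Lemma uniq_part (K : fieldType) n (L : 'rV[int]_n.+1 -> Prop) alpha a b :
  is_lattice L -> good K L alpha a -> good K L alpha b ->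
  a ord0 ord_max <= b ord0 ord_max -> a = b.
Proof.
move=> hL [ha0 [haQ haL]] [hb0 [hbQ hbL]] hab.
apply: NNPP => nab.
have hLab : L (a - b).
  have -> : a - b = (a - alpha) - (b - alpha) by rewrite opprB addrA subrK.
  exact: latB.
pose u := trunc_mon a.
pose v : 'X_{1..n.+1} :=
  [multinom (if (i < n)%N then `|b ord0 i|%N else `|b ord0 i - a ord0 i|%N) | i < n.+1].
have huv : vec u - vec v = a - b.
  apply/matrixP => z i; rewrite (ord1 z) !mxE !mnmE /=.
  case: ifPn => hi.
  - have := ha0 i hi; have := hb0 i hi; change (a 0 i) with (a ord0 i); change (b 0 i) with (b ord0 i); lia.
  - have ei : i = ord_max by apply/eqP; move: hi; rewrite ord_lt_max negbK.
    subst i; change (a 0 ord_max) with (a ord0 ord_max); change (b 0 ord_max) with (b ord0 ord_max); lia.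
have nuv : u != v.
  apply: contra_notN nab => /eqP e; apply/eqP; rewrite -subr_eq0 -huv e subrr.
  done.
case: (@zgt_total _ (vec u) (vec v)).
- by apply: contra_neq nuv; apply: (@vec_inj _ u v).
- move/zgt_revlex => gt; apply: haQ; apply: (@binom_in _ _ _ u v) => //; by rewrite huv.
- move=> gt; have [i [hi1 hi2]] := gt.
  have hin : (i < n)%N.
    apply: contraTT hi1 => hin; rewrite !vecE /u /trunc_mon mnmE /= (negbTE hin).
    by rewrite ltNge.
  have hvl : v ord_max = 0%N.
    have := hi2 ord_max; rewrite !vecE /u /trunc_mon !mnmE /= ltnn.
    by move=> h; have := h hin => -[].
  have evb : v = trunc_mon b.
    apply/mnmP => j; rewrite /trunc_mon !mnmE /=; case: ifPn => // hj.
    have ej : j = ord_max by apply/eqP; move: hj; rewrite ord_lt_max negbK.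
    by subst j; move: hvl; rewrite mnmE /= ltnn.
  apply: hbQ; rewrite -evb; apply: (@binom_in _ _ _ v u) => //.
  + by rewrite eq_sym.
  + by apply: latSym => //; rewrite huv.
  + exact: zgt_revlex.
Qed.



Lemma nonneg_rep n (L : 'rV[int]_n.+1 -> Prop) alpha :
  is_lattice L -> homogeneous L -> lattice_rank L n ->
  exists a, L (a - alpha) /\ forall i : 'I_n.+1, (i < n)%N -> 0 <= a ord0 i.
Proof.
move=> hL hH hR.
suff : forall j, (j <= n)%N -> exists a, L (a - alpha) /\
    forall i : 'I_n.+1, (i < j)%N -> 0 <= a ord0 i by move/(_ n (leqnn n)).
elim=> [_|j ih hj].
  by exists alpha; split => //; rewrite subrr; exact: hL.1.
have [a [haL ha]] := ih (ltnW hj).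
pose i : 'I_n.+1 := Ordinal (ltnW hj : (j < n.+1)%N).
pose v : 'rV[int]_n.+1 := delta_mx 0 i - delta_mx 0 ord_max.
have hv : \sum_(l < n.+1) v ord0 l = 0.
  rewrite /v; under eq_bigr do rewrite !mxE.
  rewrite sumrB.
  have e1 : forall (z : 'I_n.+1), \sum_(l < n.+1) ((ord0 == 0 :> 'I_1) && (l == z))%:R = 1 :> int.
    move=> z; rewrite (bigD1 z) //= eqxx /= big1 ?addr0 // => l hl.
    by rewrite (negbTE hl).
  by rewrite !e1 subrr.
have [k [k0 hk]] := rank_shift (ltn0Sn n) hL hH hR hv.
exists (a + (v *+ k) *+ `|a ord0 i|%N); split.
  rewrite addrAC; apply: latD => //; exact: latMn.
move=> l hl; rewrite !mxE !mulmxnE !mxE.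
have lmax : (l == ord_max) = false.
  by apply/negbTE; rewrite -ord_lt_max; apply: leq_trans hl hj.
have o1 : (ord0 == 0 :> 'I_1) = true by [].
have mE : forall (x : int) k m, x *+ k *+ m = x * (k * m)%:Z.
  by move=> x k' m; rewrite -mulrnA -mulr_natr natz.
rewrite o1 lmax /= subr0 mE.
case: (eqVneq l i) => [->|ne].
- rewrite mul1r; have : (`|a ord0 i| <= k * `|a ord0 i|)%N by rewrite leq_pmull.
  move=> h; set x := a ord0 i in h *; lia.
- have : (l < j)%N.
    rewrite ltnS leq_eqVlt in hl; case/orP: hl => // /eqP e.
    by move: ne; rewrite -(inj_eq val_inj) /= e eqxx.
  by move/ha; rewrite mul0r addr0.
Qed.



Lemma exist_part (K : fieldType) n (L : 'rV[int]_n.+1 -> Prop) alpha :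
  is_lattice L -> homogeneous L -> lattice_rank L n -> exists a, good K L alpha a.
Proof.
move=> hL hH hR.
have [a0 [ha0L ha0]] := nonneg_rep alpha hL hH hR.
pose G0 (a : 'rV[int]_n.+1) := (forall i : 'I_n.+1, (i < n)%N -> 0 <= a ord0 i) /\ L (a - alpha).
pose P (a : 'rV[int]_n.+1) := G0 a /\ (a = a0 \/ zgt a0 a).
pose Q (a : 'rV[int]_n.+1) := ~ initial_ideal (@lattice_ideal K n.+1 L) 'X_[trunc_mon a].
pose d (a : 'rV[int]_n.+1) (i : 'I_n.+1) := a ord0 i - (if (i < n)%N then 0 else a0 ord0 ord_max).
pose N := absz ((\sum_(i < n.+1) a0 ord0 i - a0 ord0 ord_max)%R).
pose e (a : 'rV[int]_n.+1) : {ffun 'I_n.+1 -> 'I_N.+1} := [ffun i => inord `|d a i|%N].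
have dge0 : forall a, P a -> forall i, 0 <= d a i.
  move=> a [[ha _] hz] i; rewrite /d; case: ifPn => hi; first by rewrite subr0; exact: ha.
  have ei : i = ord_max by apply/eqP; move: hi; rewrite ord_lt_max negbK.
  subst i; rewrite subr_ge0; case: hz => [->//|[j [hj1 hj2]]].
  case: (eqVneq j ord_max) => [ej|nj]; first by subst j; exact: ltW.
  by move: nj; rewrite -ord_lt_max => nj; rewrite hj2.
have dsum : forall a, P a -> \sum_i d a i = \sum_(i < n.+1) a0 ord0 i - a0 ord0 ord_max.
  move=> a [[_ haL] _].
  have hs : \sum_(i < n.+1) a ord0 i = \sum_(i < n.+1) a0 ord0 i.
    have : L (a - a0).
      have -> : a - a0 = (a - alpha) - (a0 - alpha) by rewrite opprB addrA subrK.
      exact: latB.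
    move/hH; under eq_bigr do rewrite !mxE.
    by rewrite sumrB => /eqP; rewrite subr_eq0 => /eqP.
  rewrite /d sumrB hs; congr (_ - _).
  rewrite big_ord_recr /= ltnn big1 ?add0r // => i _.
  by rewrite /= ltn_ord.
have dle : forall a, P a -> forall i, (`|d a i| < N.+1)%N.
  move=> a pa i; rewrite ltnS /N -(dsum a pa).
  have h1 := dge0 a pa.
  have : d a i <= \sum_j d a j.
    rewrite (bigD1 i) //= lerDl; apply: sumr_ge0 => j _; exact: h1.
  have := h1 i; have : 0 <= \sum_j d a j by apply: sumr_ge0 => j _; exact: h1.
  move: (\sum_j d a j) (d a i) => x y; lia.
have inj : forall a b, P a -> P b -> e a = e b -> a = b.
  move=> a b pa pb eab; apply/rowP => i.
  have := congr1 (fun f : {ffun 'I_n.+1 -> 'I_N.+1} => val (f i)) eab; rewrite /e !ffunE /=.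
  rewrite !inordK ?dle // => h.
  have := dge0 a pa i; have := dge0 b pb i; move: h; rewrite /d.
  change (a 0 i) with (a ord0 i); change (b 0 i) with (b ord0 i).
  move: (a ord0 i) (b ord0 i) (if (i < n)%N then 0 else a0 ord0 ord_max) => x y z; lia.
have step : forall a, P a -> ~ Q a -> exists b, P b /\ zgt a b.
  move=> a [[ha haL] hz] nq.
  have hI : initial_ideal (@lattice_ideal K n.+1 L) 'X_[trunc_mon a] by exact: NNPP.
  have [u' [gt hLu]] := KL hL hI.
  pose c := a - vec (trunc_mon a).
  exists (vec u' + c).
  have gt' : zgt a (vec u' + c).
    by have := zgt_tr c gt; rewrite /c addrC subrK.
  split => //; split; [split|].
  - move=> i hi; rewrite /c !mxE /trunc_mon mnmE /= hi.
    have := ha i hi; move: (a ord0 i) => x; lia.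
  - have -> : vec u' + c - alpha = (a - alpha) - (vec (trunc_mon a) - vec u').
      by rewrite /c; apply/rowP => i; rewrite !mxE; lia.
    exact: latB.
  - right; case: hz => [<- //|h]; exact: zgt_trans h gt'.
have pa0 : P a0 by split; [split|left].
have [a [[[ha haL] _] qa]] := fin_descent (@zgt_irr _) (@zgt_trans _) inj step pa0.
by exists a.
Qed.


Theorem lemma3p10 (K : fieldType) (s : nat) (L : 'rV[int]_s -> Prop) :
  (2 <= s)%N -> is_lattice L -> homogeneous L -> lattice_rank L s.-1 ->
  forall alpha : 'rV[int]_s, torsion_class L alpha ->
  exists! a : 'rV[int]_s,
    (forall i : 'I_s, (i < s.-1)%N -> 0 <= a ord0 i) /\
    ~ initial_ideal (@lattice_ideal K s L) 'X_[trunc_mon a] /\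
    L (a - alpha).
Proof.
case: s L => [|n] L // hs hL hH hR alpha _.
have [a ga] := exist_part K alpha hL hH hR.
exists a; split; first exact: ga.
move=> b gb.
case: (lerP (a ord0 ord_max) (b ord0 ord_max)) => h.
- exact: (uniq_part hL ga gb h).
- exact: (esym (uniq_part hL gb ga (ltW h))).
Qed.
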